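(* Let $\ell\in\mathcal{D}^-[0,\infty)$, $r\in\mathcal{D}^+[0,\infty)$ with $\inf_{t\ge0}(r(t)-\ell(t))>0$, let $c_0,c_0'\in\mathbb{R}$ and $\psi,\psi'\in\mathcal{D}[0,\infty)$ with $\psi(0)=\psi'(0)$. Suppose $(\phi,\eta)$ and $(\phi',\eta')$ solve the SP on $[\ell(\cdot),r(\cdot)]$ for $c_0+\psi$ and $c_0'+\psi'$, respectively, with corresponding constraining processes $(\eta_\ell,\eta_r)$ and $(\eta_\ell',\eta_r')$. If there exists a non-decreasing function $\nu$ with $\nu(0)=0$ such that $\psi=\psi'+\nu$, then for each $t\ge0$: (1) $\eta_\ell(t)-[c_0'-c_0]^+\le\eta_\ell'(t)\le\eta_\ell(t)+\nu(t)+[c_0-c_0']^+$; (2) $\eta_r'(t)-[c_0'-c_0]^+\le\eta_r(t)\le\eta_r'(t)+\nu(t)+[c_0-c_0']^+$.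
   Context: $\mathcal{D}[0,\infty)$ denotes the càdlàg functions $[0,\infty)\to(-\infty,\infty)$; $\mathcal{D}^-[0,\infty)$ (resp. $\mathcal{D}^+[0,\infty)$) denotes càdlàg functions with values in $[-\infty,\infty)$ (resp. $(-\infty,\infty]$); $a^+=\max\{a,0\}$. SP: $(\phi,\eta)\in\mathcal{D}[0,\infty)^2$ solves the SP on $[\ell(\cdot),r(\cdot)]$ for $\psi$ if (1) $\phi(t)=\psi(t)+\eta(t)\in[\ell(t),r(t)]$ for all $t\ge0$; (2) $\eta=\eta_\ell-\eta_r$ with $\eta_\ell,\eta_r$ non-decreasing and $\int_0^\infty \mathbb{I}_{\{\phi(s)>\ell(s)\}}\,d\eta_\ell(s)=0$, $\int_0^\infty \mathbb{I}_{\{\phi(s)<r(s)\}}\,d\eta_r(s)=0$. The pair $(\eta_\ell,\eta_r)$ is called the pair of constraining processes associated with the SP. *)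

(* Defs.v *)
From HB Require Import structures.
From mathcomp Require Import all_boot all_order all_algebra.
From mathcomp Require Import all_classical all_reals all_analysis.
Set Implicit Arguments. Unset Strict Implicit. Unset Printing Implicit Defensive.
Import Order.TTheory GRing.Theory Num.Theory.
Import numFieldNormedType.Exports.
Local Open Scope classical_set_scope.
Local Open Scope ring_scope.

(* càdlàg on [0,oo): right-continuous at every t >= 0, with a left limit at
   every t > 0.  T is any topological space: R (for D[0,oo)) or \bar R
   (for D^-[0,oo), D^+[0,oo)). *)
Definition cadlag {R : realType} {T : topologicalType} (f : R -> T) : Prop :=
  forall t : R, 0 <= t ->
    (f x @[x --> t^'+] --> f t) /\
    (0 < t -> exists l : T, f x @[x --> t^'-] --> l).

(* extension by 0 to (-oo,0): encodes the convention f(0-) = 0 *)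
Definition ext0 {R : realType} (f : R -> R) : R -> R :=
  fun x => if x < 0 then 0 else f x.

(* f is non-decreasing on [0,oo) (with f(0-) = 0, i.e. f(0) >= 0) *)
Definition nondecr0 {R : realType} (f : R -> R) : Prop :=
  forall s t : R, s <= t -> ext0 f s <= ext0 f t.

(* Lebesgue-Stieltjes (outer) measure d f of a set, for f non-decreasing on
   [0,oo), including the jump f(0) - f(0-) = f(0) at time 0. *)
Definition LSmeasure {R : realType} (f : R -> R) (A : set R) : \bar R :=
  @mu_ext _ (ocitv_type R) R (wlength (ext0 f)) A.

Definition in_bounds {R : realType} (lo hi : \bar R) (x : R) : Prop :=
  (lo <= x%:E)%E /\ (x%:E <= hi)%E.

(* (phi, eta) solves the SP on [l, r] for psi, with constraining pair
   (etal, etar); integrals dη over [0,oo) include the jump at 0 (η(0-)=0). *)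
Definition SP {R : realType} (l r : R -> \bar R) (psi phi eta etal etar : R -> R)
  : Prop :=
  [/\ cadlag phi /\ cadlag eta,
      (forall t, 0 <= t -> phi t = psi t + eta t /\ in_bounds (l t) (r t) (phi t)),
      (forall t, 0 <= t -> eta t = etal t - etar t),
      [/\ nondecr0 etal, nondecr0 etar, cadlag etal & cadlag etar] &
      (LSmeasure etal [set s | (0 <= s) /\ (l s < (phi s)%:E)%E] = 0%E /\
       LSmeasure etar [set s | (0 <= s) /\ ((phi s)%:E < r s)%E] = 0%E)].

(* Main.v *)
Require Import Defs.
From HB Require Import structures.
From mathcomp Require Import all_boot all_order all_algebra.
From mathcomp Require Import all_classical all_reals all_analysis.
From mathcomp Require Import lra.
Import Order.TTheory GRing.Theory Num.Theory.
Import numFieldNormedType.Exports.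
Local Open Scope classical_set_scope.
Local Open Scope ring_scope.
Set Implicit Arguments. Unset Strict Implicit. Unset Printing Implicit Defensive.


Lemma rind (R : realType) (P : R -> Prop) :
  (forall s, 0 <= s -> (forall u, 0 <= u -> u < s -> P u) ->
     P s /\ exists2 e, 0 < e & forall u, s < u -> u < s + e -> P u) ->
  forall t, 0 <= t -> P t.
Proof.
move=> step t t0; apply: contrapT => nPt.
pose B := [set u | 0 <= u /\ ~ P u].
have Bne : B !=set0 by exists t.
have lbB : has_lbound B by exists 0 => u [].
set tau := inf B.
have tau0 : 0 <= tau by apply: lb_le_inf => // u [].
have below : forall u, 0 <= u -> u < tau -> P u.
  move=> u u0 ut; apply: contrapT => nPu.
  have := ge_inf lbB (conj u0 nPu); rewrite leNgt ut //.
have [Ptau [e e0 win]] := step tau tau0 below.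
have te : tau < tau + e by rewrite ltrDl.
have [b [b0 nPb] btau] := inf_lt Bne te.
have := ge_inf lbB (conj b0 nPb); rewrite le_eqVlt => /predU1P[eb|ltb].
  by apply: nPb; rewrite -eb.
by apply: nPb; apply: win.
Qed.

Section H.
Context {R : realType}.

Lemma ext0_nd (f : R -> R) : nondecr0 f -> {homo ext0 f : x y / x <= y}.
Proof. by move=> h x y; apply: h. Qed.

Lemma ext0_rc (f : R -> R) : cadlag f -> right_continuous (ext0 f).
Proof.
move=> cf x; have [x0|x0] := ltP x 0.
  have -> : ext0 f x = 0 by rewrite /ext0 x0.
  apply: cvg_near_cst; near=> y.
  have y0 : y < 0 by near: y; exact: nbhs_right_lt.
  by rewrite /ext0 y0.
have -> : ext0 f x = f x by rewrite /ext0 ltNge x0.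
have [h _] := cf x x0.
apply: cvg_trans h; apply: near_eq_cvg; near=> y.
have xy : x < y by near: y; exact: nbhs_right_gt.
by rewrite /ext0 ltNge (le_trans x0 (ltW xy)).
Unshelve. all: by end_near. Qed.

Definition cum (f : R -> R) (h1 : nondecr0 f) (h2 : cadlag f) : cumulative R R :=
  HB.pack (ext0 f) (isCumulative.Build R _ R (ext0 f) (ext0_nd h1) (ext0_rc h2)).

Lemma LS_oc (f : R -> R) (h1 : nondecr0 f) (h2 : cadlag f) a b : a <= b ->
  LSmeasure f `]a, b] = (ext0 f b - ext0 f a)%:E.
Proof.
move=> ab; rewrite /LSmeasure.
have := measurable_mu_extE (wlength (cum h1 h2)) (is_ocitv a b).
move=> /= ->; rewrite wlength_itv_bnd //.
Qed.


Lemma LS_atom (f : R -> R) (h1 : nondecr0 f) v L :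
  (forall u, u < v -> ext0 f u <= L) ->
  ((ext0 f v - L)%:E <= LSmeasure f [set v])%E.
Proof.
move=> hL; rewrite /LSmeasure /mu_ext; apply: le_ereal_inf_tmp => _ [A [mA cov] <-].
have [k _ Akv] := cov v erefl.
have ge0 : forall n, (0 <= wlength (ext0 f) (A n))%E.
  move=> n; rewrite -(wlength0 (ext0 f)); apply: (le_wlength (ext0_nd h1)).
  exact: sub0set.
apply: le_trans (nneseries_lim_ge k.+1 (fun n _ _ => ge0 n)).
rewrite big_nat_recr //=.
apply: le_trans (leeDr _ _); last by apply: sume_ge0 => n _; exact: ge0.
move: (mA k) => /ocitvP [A0|[x x12 Ak]]; first by rewrite A0 in Akv.
rewrite Ak wlength_itv_bnd; last exact: ltW.
move: Akv; rewrite Ak /= in_itv /= => /andP[x1v vx2].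
rewrite lee_fin lerB //; first exact: ext0_nd.
exact: hL.
Qed.

Lemma ext0_ge0 (f : R -> R) u : 0 <= u -> ext0 f u = f u.
Proof. by move=> u0; rewrite /ext0 ltNge u0. Qed.

Lemma nd0 (f : R -> R) u w : nondecr0 f -> 0 <= u -> u <= w -> f u <= f w.
Proof.
move=> h u0 uw; rewrite -(ext0_ge0 f u0) -(ext0_ge0 f (le_trans u0 uw)).
exact: h.
Qed.

Lemma nd0_ge0 (f : R -> R) u : nondecr0 f -> 0 <= u -> 0 <= f u.
Proof.
move=> h u0; have := h (-1) u (le_trans (lerN10 R) u0).
by rewrite /ext0 ltrN10 ltNge u0.
Qed.

Lemma LS_null_sub (f : R -> R) (A B : set R) :
  A `<=` B -> LSmeasure f B = 0%E -> (LSmeasure f A <= 0)%E.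
Proof. by move=> AB <-; apply: le_mu_ext. Qed.

Lemma lemG (f H : R -> R) (Q : R -> Prop) t (h1 : nondecr0 f) (h2 : cadlag f) :
  LSmeasure f [set s | 0 <= s /\ Q s] = 0%E ->
  (forall u v, 0 <= u -> u <= v -> H u <= H v) -> 0 <= H 0 -> 0 <= t ->
  (forall u, 0 <= u -> u <= t -> ~ Q u -> f u <= H u) -> f t <= H t.
Proof.
move=> N0 Hnd H0 t0 hyp.
set x := H t.
have x0 : 0 <= x by apply: le_trans H0 (Hnd _ _ _ t0).
suff : forall u, 0 <= u -> u <= t -> f u <= x by move=> /(_ t t0 (lexx t)).
apply: (@rind R (fun u => u <= t -> f u <= x)) => s s0 IH.
have Ps : s <= t -> f s <= x.
  move=> st; apply: contrapT => /negP; rewrite -ltNge => xf.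
  have hL : forall u, u < s -> ext0 f u <= x.
    move=> u us; rewrite /ext0; case: ifPn => //; rewrite -leNgt => u0.
    exact: IH u u0 us (le_trans (ltW us) st).
  have [Qs|nQs] := pselect (Q s).
    have := LS_atom h1 hL; rewrite ext0_ge0 //.
    have sub : [set s] `<=` [set s0 | 0 <= s0 /\ Q s0] by move=> w /= ->.
    move=> /le_trans /(_ (LS_null_sub sub N0)).
    by rewrite lee_fin subr_le0 leNgt xf.
  have := hyp s s0 st nQs; rewrite leNgt => /negP; apply.
  exact: le_lt_trans (Hnd _ _ s0 st) xf.
split => //.
have [st|ts] := ltP s t; last first.
  exists 1 => // u su _ ut; exfalso.
  by move: (lt_le_trans su ut); rewrite ltNge ts.
apply: contrapT => hne.
have big : forall w, s < w -> w <= t -> x < f w.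
  move=> w sw wt; apply: contrapT => /negP; rewrite -leNgt => fw.
  apply: hne; exists (w - s); first by rewrite subr_gt0.
  move=> u su; rewrite addrC subrK => uw _.
  apply: le_trans fw; apply: nd0 h1 _ (ltW uw).
  exact: le_trans s0 (ltW su).
have fsx := Ps (ltW st).
have := LS_oc h1 h2 (ltW st); rewrite !ext0_ge0 //.
move=> m.
have : (LSmeasure f `]s, t] <= 0)%E.
  apply: LS_null_sub N0 => w /=; rewrite in_itv /= => /andP[sw wt].
  have w0 : 0 <= w by exact: le_trans s0 (ltW sw).
  split => //; apply: contrapT => nQ.
  have := hyp w w0 wt nQ; rewrite leNgt => /negP; apply.
  exact: le_lt_trans (Hnd _ _ w0 wt) (big w sw wt).
rewrite m lee_fin subr_le0 leNgt => /negP; apply.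
exact: le_lt_trans fsx (big t st (lexx t)).
Qed.

Lemma atom_contra (f : R -> R) (Q : R -> Prop) s L (h1 : nondecr0 f) :
  LSmeasure f [set s | 0 <= s /\ Q s] = 0%E -> 0 <= s -> Q s ->
  (forall u, u < s -> ext0 f u <= L) -> L < f s -> False.
Proof.
move=> N0 s0 Qs hL xf.
have := LS_atom h1 hL; rewrite ext0_ge0 //.
have sub : [set s] `<=` [set s0 | 0 <= s0 /\ Q s0] by move=> w /= ->.
move=> /le_trans /(_ (LS_null_sub sub N0)).
by rewrite lee_fin subr_le0 leNgt xf.
Qed.

Lemma flat (f : R -> R) (Q : R -> Prop) s u (h1 : nondecr0 f) (h2 : cadlag f) :
  LSmeasure f [set s | 0 <= s /\ Q s] = 0%E -> 0 <= s -> s <= u ->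
  (forall w, s < w -> w <= u -> Q w) -> f u <= f s.
Proof.
move=> N0 s0 su hQ.
have := LS_oc h1 h2 su; rewrite !ext0_ge0 //; last exact: le_trans su.
move=> m.
have : (LSmeasure f `]s, u] <= 0)%E.
  apply: LS_null_sub N0 => w /=; rewrite in_itv /= => /andP[sw wu].
  by split; [exact: le_trans s0 (ltW sw)| exact: hQ].
by rewrite m lee_fin subr_le0.
Qed.

Lemma win_case (fA HA fB HB : R -> R) (QA QB : R -> Prop) s e
  (a1 : nondecr0 fA) (b1 : cadlag fA) (a2 : nondecr0 fB) (b2 : cadlag fB) :
  LSmeasure fA [set s | 0 <= s /\ QA s] = 0%E ->
  LSmeasure fB [set s | 0 <= s /\ QB s] = 0%E ->
  (forall u v, 0 <= u -> u <= v -> HA u <= HA v) ->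
  (forall u v, 0 <= u -> u <= v -> HB u <= HB v) -> 0 <= HB 0 ->
  (forall u, 0 <= u -> ~ QB u -> fB u - HB u <= fA u - HA u) ->
  0 <= s ->
  (forall u, 0 <= u -> u < s -> fA u <= HA u /\ fB u <= HB u) ->
  fA s <= HA s -> fB s <= HB s ->
  (forall u, s < u -> u < s + e -> QA u) ->
  forall u, s < u -> u < s + e -> fA u <= HA u /\ fB u <= HB u.
Proof.
move=> NA NB HAnd HBnd HB0 cB s0 IH PAs PBs win.
have winA : forall u, s < u -> u < s + e -> fA u <= HA u.
  move=> u su ue; apply: le_trans (flat a1 b1 NA s0 (ltW su) _) _.
    by move=> w sw wu; apply: win sw (le_lt_trans wu ue).
  exact: le_trans PAs (HAnd _ _ s0 (ltW su)).
move=> u su ue; split; first exact: winA.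
have u0 : 0 <= u by exact: le_trans s0 (ltW su).
apply: (lemG (Q := QB)) => // w w0 wu nQ.
have [ws|sw] := ltP w s; first exact: (IH w w0 ws).2.
move: sw; rewrite le_eqVlt => /predU1P[<-//|sw].
have := cB w w0 nQ; have := winA w sw (le_lt_trans wu ue).
rewrite -subr_le0 => h1 h2; rewrite -subr_le0; exact: le_trans h2 h1.
Qed.

Lemma lemJ (f1 H1 f2 H2 : R -> R) (Q1 Q2 : R -> Prop)
  (a1 : nondecr0 f1) (b1 : cadlag f1) (a2 : nondecr0 f2) (b2 : cadlag f2) :
  LSmeasure f1 [set s | 0 <= s /\ Q1 s] = 0%E ->
  LSmeasure f2 [set s | 0 <= s /\ Q2 s] = 0%E ->
  (forall u v, 0 <= u -> u <= v -> H1 u <= H1 v) -> 0 <= H1 0 ->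
  (forall u v, 0 <= u -> u <= v -> H2 u <= H2 v) -> 0 <= H2 0 ->
  (forall u, 0 <= u -> ~ Q1 u -> f1 u - H1 u <= f2 u - H2 u) ->
  (forall u, 0 <= u -> ~ Q2 u -> f2 u - H2 u <= f1 u - H1 u) ->
  (forall u, 0 <= u -> Q1 u \/ Q2 u) ->
  (forall s, 0 <= s -> exists2 e, 0 < e &
     (forall u, s < u -> u < s + e -> Q1 u) \/
     (forall u, s < u -> u < s + e -> Q2 u)) ->
  forall t, 0 <= t -> f1 t <= H1 t /\ f2 t <= H2 t.
Proof.
move=> N1 N2 H1nd H10 H2nd H20 c1 c2 disj win.
apply: rind => s s0 IH.
have hL1 : forall u, u < s -> ext0 f1 u <= H1 s.
  move=> u us; rewrite /ext0; case: ifPn => [_|]; first exact: le_trans H10 (H1nd _ _ _ s0).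
  rewrite -leNgt => u0; apply: le_trans (IH u u0 us).1 (H1nd _ _ u0 (ltW us)).
have hL2 : forall u, u < s -> ext0 f2 u <= H2 s.
  move=> u us; rewrite /ext0; case: ifPn => [_|]; first exact: le_trans H20 (H2nd _ _ _ s0).
  rewrite -leNgt => u0; apply: le_trans (IH u u0 us).2 (H2nd _ _ u0 (ltW us)).
have at1 : H1 s < f1 s -> ~ Q1 s by move=> lt Q; exact: atom_contra N1 s0 Q hL1 lt.
have at2 : H2 s < f2 s -> ~ Q2 s by move=> lt Q; exact: atom_contra N2 s0 Q hL2 lt.
have P1 : f1 s <= H1 s.
  rewrite leNgt; apply/negP => lt1; have nQ1 := at1 lt1.
  have lt2 : H2 s < f2 s.
    have := c1 s s0 nQ1; rewrite -subr_gt0 in lt1.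
    by move=> /(lt_le_trans lt1); rewrite subr_gt0.
  by case: (disj s s0) => //; exact: at2.
have P2 : f2 s <= H2 s.
  rewrite leNgt; apply/negP => lt2; have nQ2 := at2 lt2.
  have lt1 : H1 s < f1 s.
    have := c2 s s0 nQ2; rewrite -subr_gt0 in lt2.
    by move=> /(lt_le_trans lt2); rewrite subr_gt0.
  by case: (disj s s0) => //; exact: at1.
split => //.
have [e e0 [w1|w2]] := win s s0; exists e => //.
  exact: (win_case a1 b1 a2 b2 N1 N2 H1nd H2nd H20 c2 s0 IH P1 P2 w1).
move=> u su ue.
have IH' : forall u, 0 <= u -> u < s -> f2 u <= H2 u /\ f1 u <= H1 u.
  by move=> w w0 ws; have [] := IH w w0 ws.
have [] := win_case a2 b2 a1 b1 N2 N1 H2nd H1nd H10 c1 s0 IH' P2 P1 w2 su ue.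
by [].
Qed.
End H.


Lemma near_right_ex (R : realType) (s : R) (P : R -> Prop) :
  (\forall u \near s^'+, P u) -> exists2 e, 0 < e & forall u, s < u -> u < s + e -> P u.
Proof.
move=> /nbhs_ballP[e e0 he]; exists e => // u su ue.
have := he u; rewrite /ball /= distrC ger0_norm; last by rewrite subr_ge0 ltW.
by apply => //; rewrite ltrBlDl.
Qed.

Lemma near_lt_E (R : realType) (s : R) (l : R -> \bar R) (b : \bar R) :
  l x @[x --> s^'+] --> l s -> (l s < b)%E -> \forall u \near s^'+, (l u < b)%E.
Proof.
move=> h lb; apply: (h [set y | (y < b)%E]); apply: open_nbhs_nbhs; split => //.
exact: open_ereal_lt_ereal.
Qed.

Lemma near_gt_E (R : realType) (s : R) (l : R -> \bar R) (b : \bar R) :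
  l x @[x --> s^'+] --> l s -> (b < l s)%E -> \forall u \near s^'+, (b < l u)%E.
Proof.
move=> h lb; apply: (h [set y | (b < y)%E]); apply: open_nbhs_nbhs; split => //.
exact: open_ereal_gt_ereal.
Qed.

Lemma near_lt_R (R : realType) (s : R) (p : R -> R) (b : R) :
  p x @[x --> s^'+] --> p s -> p s < b -> \forall u \near s^'+, p u < b.
Proof.
move=> h lb; apply: (h [set y | y < b]); apply: open_nbhs_nbhs; split => //; exact: open_lt.
Qed.

Lemma near_gt_R (R : realType) (s : R) (p : R -> R) (b : R) :
  p x @[x --> s^'+] --> p s -> b < p s -> \forall u \near s^'+, b < p u.
Proof.
move=> h lb; apply: (h [set y | b < y]); apply: open_nbhs_nbhs; split => //; exact: open_gt.
Qed.

Lemma window (R : realType) (l r : R -> \bar R) (phi : R -> R) delta s :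
  cadlag l -> cadlag r -> cadlag phi -> 0 < delta -> 0 <= s ->
  l s != +oo%E -> r s != -oo%E -> (delta%:E <= r s - l s)%E ->
  exists2 e, 0 < e & (forall u, s < u -> u < s + e -> (l u < (phi u)%:E)%E) \/
                     (forall u, s < u -> u < s + e -> ((phi u)%:E < r u)%E).
Proof.
move=> cl cr cp d0 s0 lnoo rnoo dlr.
set c := phi s.
have [hp _] := cp s s0.
have [hl _] := cl s s0.
have [hr _] := cr s s0.
have d4 : 0 < delta / 4 by rewrite divr_gt0.
have d2 : 0 < delta / 2 by rewrite divr_gt0.
have [lt|ge] := ltP (l s) ((c - delta / 2)%:E).
  have : \forall u \near s^'+, (l u < (phi u)%:E)%E.
    near=> u.
    have h1 : (l u < (c - delta / 2)%:E)%E by near: u; exact: near_lt_E.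
    have h2 : c - delta / 4 < phi u.
      near: u; apply: near_gt_R => //; rewrite /c; lra.
    apply: (lt_trans h1); rewrite lte_fin; lra.
  move=> /near_right_ex [e e0 he]; exists e => //; left; exact: he.
have rb : ((c + delta / 4)%:E < r s)%E.
  move: lnoo rnoo dlr ge; case: (l s) => [x| |] //; case: (r s) => [y| |] //=.
  - move=> _ _; rewrite -EFinB !lee_fin lte_fin => dyx cx.
    lra.
  - by move=> *; rewrite ltry.
have : \forall u \near s^'+, ((phi u)%:E < r u)%E.
  near=> u.
  have h1 : ((c + delta / 4)%:E < r u)%E by near: u; exact: near_gt_E.
  have h2 : phi u < c + delta / 4.
    near: u; apply: near_lt_R => //; rewrite /c; lra.
  by apply: lt_trans h1; rewrite lte_fin.
move=> /near_right_ex [e e0 he]; exists e => //; right; exact: he.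
Unshelve. all: by end_near. Qed.

Unset Implicit Arguments.

Theorem proposition3p5 (R : realType) (l r : R -> \bar R)
  (c0 c0' : R) (psi psi' phi eta etal etar phi' eta' etal' etar' nu : R -> R) :
  cadlag l -> (forall t, 0 <= t -> l t != +oo%E) ->
  cadlag r -> (forall t, 0 <= t -> r t != -oo%E) ->
  (exists2 delta : R, 0 < delta &
     forall t, 0 <= t -> (delta%:E <= r t - l t)%E) ->
  cadlag psi -> cadlag psi' -> psi 0 = psi' 0 ->
  SP l r (fun t => c0 + psi t) phi eta etal etar ->
  SP l r (fun t => c0' + psi' t) phi' eta' etal' etar' ->
  (forall s t, 0 <= s -> s <= t -> nu s <= nu t) -> nu 0 = 0 ->
  (forall t, 0 <= t -> psi t = psi' t + nu t) ->
  forall t, 0 <= t ->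
    (etal t - Num.max (c0' - c0) 0 <= etal' t /\
     etal' t <= etal t + nu t + Num.max (c0 - c0') 0) /\
    (etar' t - Num.max (c0' - c0) 0 <= etar t /\
     etar t <= etar' t + nu t + Num.max (c0 - c0') 0).

Proof.
move=> cl lnoo cr rnoo [delta d0 hd] cpsi cpsi' psi00 SP1 SP2 nund nu0 hnu t t0.
case: SP1 => [[cphi ceta] hphi heta [a1 a2 b1 b2] [N1 N2]].
case: SP2 => [[cphi' ceta'] hphi' heta' [a1' a2' b1' b2'] [N1' N2']].
set b := Num.max (c0' - c0) 0; set b' := Num.max (c0 - c0') 0.
have bb : b - b' = c0' - c0.
  by rewrite /b /b' !maxEle; case: leP => h1; case: leP => h2; lra.
have b0 : 0 <= b by rewrite /b le_max lexx orbT.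
have b'0 : 0 <= b' by rewrite /b' le_max lexx orbT.
have key : forall u, 0 <= u -> phi u - phi' u =
    (c0 - c0') + nu u + (etal u - etal' u) - (etar u - etar' u).
  move=> u u0; rewrite (hphi u u0).1 (hphi' u u0).1 (heta u u0) (heta' u u0) (hnu u u0).
  lra.
have nuge0 : forall u, 0 <= u -> 0 <= nu u by move=> u u0; rewrite -nu0; exact: nund.
have disj : forall (p : R) u, 0 <= u -> (p%:E <= l u)%E -> (r u <= p%:E)%E -> False.
  move=> p u u0; have := hd u u0; have := lnoo u u0; have := rnoo u u0.
  case: (l u) => [x| |] //; case: (r u) => [y| |] //=.
  rewrite -EFinB !lee_fin => _ _ h1 h2 h3; lra.
have nlt : forall (x y : \bar R), ~ (x < y)%E -> (y <= x)%E.
  by move=> x y /negP; rewrite -leNgt.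
have P1 := @lemJ R etal (fun u => etal' u + b) etar (fun u => etar' u + nu u + b')
  (fun s => (l s < (phi s)%:E)%E) (fun s => ((phi s)%:E < r s)%E)
  a1 b1 a2 b2 N1 N2.
have P2 := @lemJ R etal' (fun u => etal u + nu u + b') etar' (fun u => etar u + b)
  (fun s => (l s < (phi' s)%:E)%E) (fun s => ((phi' s)%:E < r s)%E)
  a1' b1' a2' b2' N1' N2'.
have [] := P1 _ _ _ _ _ _ _ _ t t0.
- by move=> u v u0 uv; rewrite lerD2r; exact: nd0 a1' u0 uv.
- by rewrite addr_ge0 // nd0_ge0.
- move=> u v u0 uv; rewrite lerD2r; apply: lerD; first exact: nd0 a2' u0 uv.
  exact: nund.
- by rewrite nu0 addr0 addr_ge0 // nd0_ge0.
- move=> u u0 /nlt h; have [_ [h' _]] := hphi' u u0.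
  have := le_trans h h'; rewrite lee_fin => le; have := key u u0; lra.
- move=> u u0 /nlt h; have [_ [_ h']] := hphi' u u0.
  have := le_trans h' h; rewrite lee_fin => le; have := key u u0; lra.
- move=> u u0; apply: contrapT => /not_orP[/nlt h1 /nlt h2].
  exact: disj u u0 h1 h2.
- move=> s s0; exact: window cl cr cphi d0 s0 (lnoo s s0) (rnoo s s0) (hd s s0).
move=> A D.
have [] := P2 _ _ _ _ _ _ _ _ t t0.
- move=> u v u0 uv; rewrite lerD2r; apply: lerD; first exact: nd0 a1 u0 uv.
  exact: nund.
- by rewrite nu0 addr0 addr_ge0 // nd0_ge0.
- by move=> u v u0 uv; rewrite lerD2r; exact: nd0 a2 u0 uv.
- by rewrite addr_ge0 // nd0_ge0.
- move=> u u0 /nlt h; have [_ [h' _]] := hphi u u0.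
  have := le_trans h h'; rewrite lee_fin => le; have := key u u0; lra.
- move=> u u0 /nlt h; have [_ [_ h']] := hphi u u0.
  have := le_trans h' h; rewrite lee_fin => le; have := key u u0; lra.
- move=> u u0; apply: contrapT => /not_orP[/nlt h1 /nlt h2].
  exact: disj u u0 h1 h2.
- move=> s s0; exact: window cl cr cphi' d0 s0 (lnoo s s0) (rnoo s s0) (hd s s0).
move=> C B.
split; split; lra.
Qed.
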